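(* Let $k=2$, $\Phi\equiv0$, $H$ convex, $f\ge0$, and $g=fH''\ge0$. Consider the cell-average update on a uniform mesh with zero-flux boundary conditions $$\bar u_j^{n+1}=\bar u_j^n+\mu h\,\{g(u_h^n)\}\widehat{\partial_xu_h^n}\Big|_{\partial I_j},\qquad j=1,\dots,N,$$ where $\mu=\Delta t/h^2$, $w|_{\partial I_j}:=w(x_{j+1/2})-w(x_{j-1/2})$, $\widehat{\partial_x u_h}=\beta_0\frac{[u_h]}{h}+\{\partial_xu_h\}+\beta_1h[\partial_x^2u_h]$ at interior interfaces, and the boundary terms at $x_{1/2}$ and $x_{N+1/2}$ are zero. Suppose $$\frac18<\beta_1<\frac14,\qquad \beta_0\ge1,$$ and $c_1\le c_2$ are constants with $u_h^n(x)\in[c_1,c_2]$ for all $x\in S_j=x_j+\frac h2\{-1,0,1\}$ and all $j=1,\dots,N$. If $$\mu\le\frac{1}{12\max_{j}|g_{j-1/2}|}\min\left\{\frac{1}{\beta_0+8\beta_1-2},\frac{1}{1-4\beta_1}\right\},$$ where $g_{j+1/2}=\{g(u_h^n)\}|_{x_{j+1/2}}$ for interior interfaces and $g_{1/2}=g_{N+1/2}=0$, then $\bar u_j^{n+1}\in[c_1,c_2]$ for all $j$.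
   Context: Uniform mesh of $\Omega=[a,b]$ with cells $I_j=(x_{j-1/2},x_{j+1/2})$ of length $h$, centers $x_j$; $u_h^n\in V_h=\{v: v|_{I_j}\in P^2(I_j)\}$, and $\bar u_j^n=\frac1h\int_{I_j}u_h^n\,dx$. At interior interfaces, $v^\pm$ are right/left limits, $[v]=v^+-v^-$, $\{v\}=(v^++v^-)/2$. The update is the cell-average equation of the forward Euler DG scheme for $\partial_tu=\partial_x(f(u)H''(u)\partial_xu)$ (i.e. the scheme with $\Phi=0$, $q_h=u_h$ and $f$ replaced by $fH''$). *)

(* Defs.v *)
From Stdlib Require Import Reals Lra List Arith.
Open Scope R_scope.

(* Uniform mesh of [a, b], b = a + N h.  Cells I_j = (x_{j-1/2}, x_{j+1/2}),
   j = 1..N.  Interfaces are indexed by i = 0..N : xface i = x_{i+1/2}. *)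
Definition xface (a h : R) (i : nat) : R := a + INR i * h.
Definition xcen (a h : R) (j : nat) : R := a + (INR j - / 2) * h.

(* u j : the (polynomial extension of the) restriction of u_h^n to I_j;
   du j, d2u j : its first and second derivatives.
   At interface x_{i+1/2} (1 <= i <= N-1): v^- comes from cell i, v^+ from cell i+1. *)
Definition jmp (v : nat -> R -> R) (a h : R) (i : nat) : R :=
  v (S i) (xface a h i) - v i (xface a h i).
Definition avgf (v : nat -> R -> R) (a h : R) (i : nat) : R :=
  (v (S i) (xface a h i) + v i (xface a h i)) / 2.

Definition interior (N i : nat) : bool := (1 <=? i)%nat && (i <? N)%nat.

Definition gface (g : R -> R) (u : nat -> R -> R) (a h : R) (N i : nat) : R :=
  if interior N i then avgf (fun j x => g (u j x)) a h i else 0.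

Definition flux (g : R -> R) (u du d2u : nat -> R -> R) (b0 b1 a h : R)
    (N i : nat) : R :=
  if interior N i then
    avgf (fun j x => g (u j x)) a h i *
      (b0 * jmp u a h i / h + avgf du a h i + b1 * h * jmp d2u a h i)
  else 0.

Definition gmax (g : R -> R) (u : nat -> R -> R) (a h : R) (N : nat) : R :=
  fold_right Rmax 0 (map (fun i => Rabs (gface g u a h N i)) (seq 0 (S N))).

Definition convex (H : R -> R) : Prop :=
  forall x y t, 0 <= t <= 1 -> H (t * x + (1 - t) * y) <= t * H x + (1 - t) * H y.

Definition is_quadratic (p : R -> R) : Prop :=
  exists c0 c1 c2 : R, forall x, p x = c0 + c1 * x + c2 * x ^ 2.

(* Main.v *)
Require Import Defs.
From Stdlib Require Import Reals Lra List Arith.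
From Coquelicot Require Import Coquelicot.
From Stdlib Require Import Lia.
Open Scope R_scope.

Lemma quad_facts (p dp d2p : R -> R) (xl h : R) : 0 < h -> is_quadratic p ->
  (forall x, derivable_pt_lim p x (dp x)) -> (forall x, derivable_pt_lim dp x (d2p x)) ->
  dp (xl+h) = (3*p(xl+h) + p xl - 4*p(xl+h/2))/h /\
  dp xl = (4*p(xl+h/2) - 3*p xl - p(xl+h))/h /\
  d2p xl = 4*(p(xl+h)+p xl - 2*p(xl+h/2))/h^2 /\
  d2p (xl+h) = 4*(p(xl+h)+p xl - 2*p(xl+h/2))/h^2 /\
  (forall pr : Riemann_integrable p xl (xl+h),
      RiemannInt pr = h*(p xl + 4*p(xl+h/2) + p(xl+h))/6).
Proof.
  intros hp [k0 [k1 [k2 Hk]]] Hd Hd2.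
  assert (E1 : forall x, dp x = k1 + 2*k2*x).
  { intro x. apply (uniqueness_limite p x); auto. apply is_derive_Reals.
    apply is_derive_ext with (f := fun x => k0+k1*x+k2*x^2).
    intros; symmetry; auto. auto_derive; auto; ring. }
  assert (E2 : forall x, d2p x = 2*k2).
  { intro x. apply (uniqueness_limite dp x); auto. apply is_derive_Reals.
    apply is_derive_ext with (f := fun x => k1+2*k2*x).
    intros; symmetry; auto. auto_derive; auto; ring. }
  rewrite !E1, !E2, !Hk. repeat split; try (field; lra).
  intro pr. rewrite <- RInt_Reals. apply is_RInt_unique.
  apply is_RInt_ext with (f := fun x => k0+k1*x+k2*x^2).
  { intros; symmetry; auto. }
  set (F := fun x => k0*x + k1*x^2/2 + k2*x^3/3).
  replace (h * _ / 6) with (minus (F (xl+h)) (F xl)).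
  2:{ unfold minus, plus, opp; simpl. unfold F. field. }
  apply (is_RInt_derive (V := R_CompleteNormedModule) F).
  - intros; unfold F; auto_derive; auto; field.
  - intros; apply continuous_ext with (f := fun x => k0+k1*x+k2*x^2); auto.
    apply (ex_derive_continuous (fun x => k0+k1*x+k2*x^2)). auto_derive; auto.
Qed.
Lemma core (b0 b1 c1 c2 m A B Lj Mj Rj Lp Mp Rp Lm Mm Rm : R) :
  / 8 < b1 < / 4 -> 1 <= b0 -> 0 <= A <= m -> 0 <= B <= m ->
  12*m*(b0+8*b1-2) <= 1 -> 12*m*(1-4*b1) <= 1 ->
  c1 <= Lj <= c2 -> c1 <= Mj <= c2 -> c1 <= Rj <= c2 ->
  c1 <= Lp <= c2 -> c1 <= Mp <= c2 -> c1 <= Rp <= c2 ->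
  c1 <= Lm <= c2 -> c1 <= Mm <= c2 -> c1 <= Rm <= c2 ->
  c1 <= (Lj+4*Mj+Rj)/6
   + A*((1/2-4*b1)*Lj + (8*b1-2)*Mj + (3/2-b0-4*b1)*Rj + (b0-3/2+4*b1)*Lp + (2-8*b1)*Mp + (4*b1-1/2)*Rp)
   + B*((3/2-b0-4*b1)*Lj + (8*b1-2)*Mj + (1/2-4*b1)*Rj + (b0-3/2+4*b1)*Rm + (2-8*b1)*Mm + (4*b1-1/2)*Lm)
   <= c2.
Proof.
  intros Hb1 Hb0 HA HB H1 H2 hLj hMj hRj hLp hMp hRp hLm hMm hRm.
  assert (a1 : A*(4*b1-1/2) <= m*(4*b1-1/2)) by (apply Rmult_le_compat_r; lra).
  assert (a2 : B*(b0+4*b1-3/2) <= m*(b0+4*b1-3/2)) by (apply Rmult_le_compat_r; lra).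
  assert (a3 : B*(4*b1-1/2) <= m*(4*b1-1/2)) by (apply Rmult_le_compat_r; lra).
  assert (a4 : A*(b0+4*b1-3/2) <= m*(b0+4*b1-3/2)) by (apply Rmult_le_compat_r; lra).
  assert (a5 : (A+B)*(2-8*b1) <= (2*m)*(2-8*b1)) by (apply Rmult_le_compat_r; lra).
  set (cL := 1/6 + A*(1/2-4*b1) + B*(3/2-b0-4*b1)).
  set (cM := 2/3 + (A+B)*(8*b1-2)).
  set (cR := 1/6 + A*(3/2-b0-4*b1) + B*(1/2-4*b1)).
  assert (pL : 0 <= cL) by (unfold cL; nra).
  assert (pM : 0 <= cM) by (unfold cM; nra).
  assert (pR : 0 <= cR) by (unfold cR; nra).
  assert (q1 : 0 <= A*(b0-3/2+4*b1)) by (apply Rmult_le_pos; lra).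
  assert (q2 : 0 <= A*(2-8*b1)) by (apply Rmult_le_pos; lra).
  assert (q3 : 0 <= A*(4*b1-1/2)) by (apply Rmult_le_pos; lra).
  assert (q4 : 0 <= B*(b0-3/2+4*b1)) by (apply Rmult_le_pos; lra).
  assert (q5 : 0 <= B*(2-8*b1)) by (apply Rmult_le_pos; lra).
  assert (q6 : 0 <= B*(4*b1-1/2)) by (apply Rmult_le_pos; lra).
  match goal with |- _ <= ?v <= _ => set (V := v) end.
  assert (E : forall c, V - c = cL*(Lj-c) + cM*(Mj-c) + cR*(Rj-c)
     + A*(b0-3/2+4*b1)*(Lp-c) + A*(2-8*b1)*(Mp-c) + A*(4*b1-1/2)*(Rp-c)
     + B*(b0-3/2+4*b1)*(Rm-c) + B*(2-8*b1)*(Mm-c) + B*(4*b1-1/2)*(Lm-c)).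
  { intro c; unfold V, cL, cM, cR; field. }
  split.
  - assert (0 <= V - c1); [|lra]. rewrite E.
    repeat apply Rplus_le_le_0_compat; apply Rmult_le_pos; lra.
  - assert (0 <= c2 - V); [|lra].
    replace (c2 - V) with (cL*(c2-Lj) + cM*(c2-Mj) + cR*(c2-Rj)
     + A*(b0-3/2+4*b1)*(c2-Lp) + A*(2-8*b1)*(c2-Mp) + A*(4*b1-1/2)*(c2-Rp)
     + B*(b0-3/2+4*b1)*(c2-Rm) + B*(2-8*b1)*(c2-Mm) + B*(4*b1-1/2)*(c2-Lm))
     by (unfold V, cL, cM, cR; field).
    repeat apply Rplus_le_le_0_compat; apply Rmult_le_pos; lra.
Qed.
Lemma fold_max_in (l : list R) x : In x l -> x <= fold_right Rmax 0 l.
Proof.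
  induction l as [|y l IH]; simpl; [tauto|].
  intros [<-|Hx]. apply Rmax_l. eapply Rle_trans; [apply IH; auto| apply Rmax_r].
Qed.

Lemma gmax_ge g u a h N i : (i <= N)%nat -> Rabs (gface g u a h N i) <= gmax g u a h N.
Proof.
  intro Hi. unfold gmax. apply fold_max_in. apply (in_map (fun i => Rabs (gface g u a h N i))). apply in_seq. lia.
Qed.

Theorem theorem3p4
  (f H H1 H2 g : R -> R)
  (HH1 : forall x, derivable_pt_lim H x (H1 x))
  (HH2 : forall x, derivable_pt_lim H1 x (H2 x))
  (Hconv : convex H)
  (Hf : forall x, 0 <= f x)
  (Hg : forall x, g x = f x * H2 x)
  (Hgnn : forall x, 0 <= g x)
  (a h dt : R) (N : nat) (hpos : 0 < h) (dtpos : 0 < dt) (HN : (1 <= N)%nat)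
  (u du d2u : nat -> R -> R)
  (Hquad : forall j, is_quadratic (u j))
  (Hdu : forall j x, derivable_pt_lim (u j) x (du j x))
  (Hd2u : forall j x, derivable_pt_lim (du j) x (d2u j x))
  (b0 b1 c1 c2 : R)
  (Hb1 : / 8 < b1 < / 4) (Hb0 : 1 <= b0) (Hc : c1 <= c2)
  (Hbounds : forall j : nat, (1 <= j <= N)%nat ->
      forall s, In s (-1 :: 0 :: 1 :: nil) ->
      c1 <= u j (xcen a h j + s * (h / 2)) <= c2)
  (Hcfl : dt / h ^ 2 * (12 * gmax g u a h N)
          <= Rmin (/ (b0 + 8 * b1 - 2)) (/ (1 - 4 * b1))) :
  forall j : nat, (1 <= j <= N)%nat ->
  forall pr : Riemann_integrable (u j) (xface a h (j - 1)) (xface a h j),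
    c1 <= RiemannInt pr / h
          + dt / h ^ 2 * h * (flux g u du d2u b0 b1 a h N j
                              - flux g u du d2u b0 b1 a h N (j - 1))
       <= c2.
Proof.
  intros j Hj pr.
  set (xm := fun k => xcen a h k + 0 * (h/2)).
  assert (Pts : forall k, (1 <= k)%nat ->
     xcen a h k + -1*(h/2) = xface a h (k-1) /\ xm k = xface a h (k-1) + h/2 /\
     xcen a h k + 1*(h/2) = xface a h (k-1) + h /\ xface a h k = xface a h (k-1) + h).
  { intros k Hk. unfold xm, xcen, xface. rewrite minus_INR by lia. simpl. repeat split; field. }
  assert (Cell : forall k, (1 <= k <= N)%nat ->
     (c1 <= u k (xface a h (k-1)) <= c2 /\ c1 <= u k (xm k) <= c2 /\ c1 <= u k (xface a h k) <= c2) /\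
     du k (xface a h k) = (3*u k (xface a h k) + u k (xface a h (k-1)) - 4*u k (xm k))/h /\
     du k (xface a h (k-1)) = (4*u k (xm k) - 3*u k (xface a h (k-1)) - u k (xface a h k))/h /\
     d2u k (xface a h (k-1)) = 4*(u k (xface a h k) + u k (xface a h (k-1)) - 2*u k (xm k))/h^2 /\
     d2u k (xface a h k) = 4*(u k (xface a h k) + u k (xface a h (k-1)) - 2*u k (xm k))/h^2 /\
     (forall pr : Riemann_integrable (u k) (xface a h (k-1)) (xface a h k),
      RiemannInt pr = h*(u k (xface a h (k-1)) + 4*u k (xm k) + u k (xface a h k))/6)).
  { intros k Hk. destruct (Pts k ltac:(lia)) as [P1 [P2 [P3 P4]]].
    pose proof (Hbounds k Hk (-1) ltac:(simpl; tauto)) as B1.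
    pose proof (Hbounds k Hk 0 ltac:(simpl; tauto)) as B2.
    pose proof (Hbounds k Hk 1 ltac:(simpl; tauto)) as B3.
    rewrite P1 in B1. rewrite P3 in B3. fold (xm k) in B2.
    rewrite P4, P2.
    destruct (quad_facts (u k) (du k) (d2u k) (xface a h (k-1)) h hpos (Hquad k) (Hdu k) (Hd2u k))
      as [Q1 [Q2 [Q3 [Q4 Q5]]]].
    rewrite P2 in B2. repeat split; try lra; auto. }
  set (m := dt / h^2 * gmax g u a h N).
  assert (gm0 : 0 <= gmax g u a h N).
  { eapply Rle_trans; [apply Rabs_pos| apply (gmax_ge g u a h N 0); lia]. }
  assert (mu0 : 0 < dt / h^2) by (apply Rdiv_lt_0_compat; [lra| apply pow_lt; lra]).
  assert (m0 : 0 <= m) by (unfold m; apply Rmult_le_pos; lra).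
  assert (C1 : 12*m*(b0+8*b1-2) <= 1).
  { assert (12*m <= / (b0+8*b1-2)).
    { eapply Rle_trans; [|apply Rmin_l]. unfold m; replace (12 * (dt / h ^ 2 * gmax g u a h N)) with (dt / h ^ 2 * (12 * gmax g u a h N)) by ring; exact Hcfl. }
    replace 1 with (/ (b0+8*b1-2) * (b0+8*b1-2)) by (field; lra).
    apply Rmult_le_compat_r; lra. }
  assert (C2 : 12*m*(1-4*b1) <= 1).
  { assert (12*m <= / (1-4*b1)).
    { eapply Rle_trans; [|apply Rmin_r]. unfold m; replace (12 * (dt / h ^ 2 * gmax g u a h N)) with (dt / h ^ 2 * (12 * gmax g u a h N)) by ring; exact Hcfl. }
    apply Rle_trans with (/ (1-4*b1) * (1-4*b1)); [apply Rmult_le_compat_r; lra| right; field; lra]. }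
  destruct (Cell j Hj) as [[BLj [BMj BRj]] [DRj [DLj [D2Lj [D2Rj Ij]]]]].
  set (Lj := u j (xface a h (j-1))) in *.
  set (Mj := u j (xm j)) in *.
  set (Rj := u j (xface a h j)) in *.
  assert (PP : exists A Lp Mp Rp, 0 <= A <= m /\ c1 <= Lp <= c2 /\ c1 <= Mp <= c2 /\ c1 <= Rp <= c2 /\
     dt / h^2 * h * flux g u du d2u b0 b1 a h N j =
     A*((1/2-4*b1)*Lj + (8*b1-2)*Mj + (3/2-b0-4*b1)*Rj + (b0-3/2+4*b1)*Lp + (2-8*b1)*Mp + (4*b1-1/2)*Rp)).
  { unfold flux. destruct (Defs.interior N j) eqn:Ei.
    - unfold Defs.interior in Ei. apply andb_prop in Ei as [E1 E2].
      apply Nat.leb_le in E1. apply Nat.ltb_lt in E2.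
      destruct (Cell (S j) ltac:(lia)) as [[BL [BM BR]] [DR [DL [D2L [D2R _]]]]].
      replace (S j - 1)%nat with j in * by lia.
      set (gp := avgf (fun j x => g (u j x)) a h j).
      assert (gp0 : 0 <= gp).
      { unfold gp, avgf. pose proof (Hgnn (u (S j) (xface a h j))).
        pose proof (Hgnn (u j (xface a h j))). lra. }
      assert (gpm : gp <= gmax g u a h N).
      { eapply Rle_trans; [|apply (gmax_ge g u a h N j); lia].
        unfold gface. replace (Defs.interior N j) with true.
        2:{ symmetry; unfold Defs.interior; apply andb_true_intro; split;
            [apply Nat.leb_le | apply Nat.ltb_lt]; lia. }
        fold gp. rewrite Rabs_right; lra. }
      exists (dt/h^2*gp), (u (S j) (xface a h j)), (u (S j) (xm (S j))), (u (S j) (xface a h (S j))).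
      split; [split; [apply Rmult_le_pos; lra| unfold m; apply Rmult_le_compat_l; lra]|].
      split; [auto|split; [auto|split; [auto|]]].
      fold gp. unfold jmp, avgf. rewrite DL, DRj, D2L, D2Rj. fold Rj.
      field. lra.
    - exists 0, Lj, Mj, Rj. repeat split; try lra; ring. }
  assert (MM : exists B Lm Mm Rm, 0 <= B <= m /\ c1 <= Lm <= c2 /\ c1 <= Mm <= c2 /\ c1 <= Rm <= c2 /\
     dt / h^2 * h * flux g u du d2u b0 b1 a h N (j-1) =
     - (B*((3/2-b0-4*b1)*Lj + (8*b1-2)*Mj + (1/2-4*b1)*Rj + (b0-3/2+4*b1)*Rm + (2-8*b1)*Mm + (4*b1-1/2)*Lm))).
  { unfold flux. destruct (Defs.interior N (j-1)) eqn:Ei.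
    - unfold Defs.interior in Ei. apply andb_prop in Ei as [E1 E2].
      apply Nat.leb_le in E1. apply Nat.ltb_lt in E2.
      destruct (Cell (j-1)%nat ltac:(lia)) as [[BL [BM BR]] [DR [DL [D2L [D2R _]]]]].
      replace (S (j - 1))%nat with j in * by lia.
      set (gp := avgf (fun j x => g (u j x)) a h (j-1)).
      assert (gp0 : 0 <= gp).
      { unfold gp, avgf. replace (S (j - 1))%nat with j by lia.
        pose proof (Hgnn (u j (xface a h (j-1)))).
        pose proof (Hgnn (u (j-1)%nat (xface a h (j-1)))). lra. }
      assert (gpm : gp <= gmax g u a h N).
      { eapply Rle_trans; [|apply (gmax_ge g u a h N (j-1)); lia].
        unfold gface. replace (Defs.interior N (j-1)) with true.
        2:{ symmetry; unfold Defs.interior; apply andb_true_intro; split;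
            [apply Nat.leb_le | apply Nat.ltb_lt]; lia. }
        fold gp. rewrite Rabs_right; lra. }
      exists (dt/h^2*gp), (u (j-1)%nat (xface a h (j-1-1))), (u (j-1)%nat (xm (j-1)%nat)), (u (j-1)%nat (xface a h (j-1))).
      split; [split; [apply Rmult_le_pos; lra| unfold m; apply Rmult_le_compat_l; lra]|].
      split; [auto|split; [auto|split; [auto|]]].
      fold gp. unfold jmp, avgf. replace (S (j - 1))%nat with j by lia.
      rewrite DR, DLj, D2R, D2Lj. fold Lj.
      field. lra.
    - exists 0, Lj, Mj, Rj. repeat split; try lra; ring. }
  destruct PP as [A [Lp [Mp [Rp [HA [BLp [BMp [BRp EP]]]]]]]].
  destruct MM as [B [Lm [Mm [Rm [HB [BLm [BMm [BRm EM]]]]]]]].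
  rewrite Rmult_minus_distr_l, EP, EM, Ij.
  replace (h * (Lj + 4 * Mj + Rj) / 6 / h) with ((Lj + 4 * Mj + Rj) / 6) by (field; lra).
  pose proof (core b0 b1 c1 c2 m A B Lj Mj Rj Lp Mp Rp Lm Mm Rm Hb1 Hb0 HA HB C1 C2
     BLj BMj BRj BLp BMp BRp BLm BMm BRm).
  replace ((Lj + 4 * Mj + Rj) / 6 + (A * ((1 / 2 - 4 * b1) * Lj + (8 * b1 - 2) * Mj + (3 / 2 - b0 - 4 * b1) * Rj + (b0 - 3 / 2 + 4 * b1) * Lp + (2 - 8 * b1) * Mp + (4 * b1 - 1 / 2) * Rp) - - (B * ((3 / 2 - b0 - 4 * b1) * Lj + (8 * b1 - 2) * Mj + (1 / 2 - 4 * b1) * Rj + (b0 - 3 / 2 + 4 * b1) * Rm + (2 - 8 * b1) * Mm + (4 * b1 - 1 / 2) * Lm))))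
    with ((Lj + 4 * Mj + Rj) / 6 + A * ((1 / 2 - 4 * b1) * Lj + (8 * b1 - 2) * Mj + (3 / 2 - b0 - 4 * b1) * Rj + (b0 - 3 / 2 + 4 * b1) * Lp + (2 - 8 * b1) * Mp + (4 * b1 - 1 / 2) * Rp) + B * ((3 / 2 - b0 - 4 * b1) * Lj + (8 * b1 - 2) * Mj + (1 / 2 - 4 * b1) * Rj + (b0 - 3 / 2 + 4 * b1) * Rm + (2 - 8 * b1) * Mm + (4 * b1 - 1 / 2) * Lm)) by ring.
  auto.
Qed.
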